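(* Let $k\ge 1$, let $j_1,\dots,j_h\le k$ be distinct positive integers and let $a_1,\dots,a_h$ be positive integers. Then \[ \mathbb{E}\, |\mathscr{L}(\mathbf{X}_k)|\, X_{j_1}^{a_1}\cdots X_{j_h}^{a_h} \le \frac{C_{a_1,\dots,a_h}}{j_1\cdots j_h}\,\mathbb{E}|\mathscr{L}(\mathbf{X}_k)|, \] where $C_{a_1,\dots,a_h} = \prod_{i=1}^h (B_{a_i}+B_{a_i+1})$ and $B_m$ denotes the $m$-th Bell number (so $B_1=1,B_2=2,B_3=5,\dots$). In particular one may take $C_1=3$.
   Context: Let $X_1,X_2,\dots$ be independent random variables with $X_j$ Poisson distributed with parameter $1/j$, and $\mathbf{X}_k=(X_1,\dots,X_k)$. For a finite list $\mathbf{c}=(c_1,\dots,c_k)$ of non-negative integers, $\mathscr{L}(\mathbf{c}) = \{m_1+2m_2+\cdots+km_k : 0\le m_j\le c_j \text{ for } j=1,\dots,k\}$, and $|\cdot|$ denotes cardinality. The $m$-th Bell number $B_m$ equals $\mathbb{E}X^m$ for $X$ Poisson with parameter $1$. *)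

(* Defs.v *)
From HB Require Import structures.
From mathcomp Require Import all_boot all_order all_algebra.
From mathcomp Require Import all_classical all_reals all_analysis.
Set Implicit Arguments. Unset Strict Implicit. Unset Printing Implicit Defensive.
Import Order.TTheory GRing.Theory Num.Theory.
Local Open Scope classical_set_scope.
Local Open Scope ring_scope.

Fixpoint bell_seq (n : nat) : seq nat :=
  match n with
  | 0 => [:: 1%N]
  | n'.+1 => let s := bell_seq n' in
             rcons s (\sum_(i < n'.+1) 'C(n', i) * nth 0%N s i)%N
  end.
Definition bell (n : nat) : nat := nth 0%N (bell_seq n) n.

(* A list c = (c_1,...,c_k) is encoded as c : {ffun 'I_k -> nat}, with
   c i standing for c_{i+1}.
   Every element of L(c) is <= sum_j j c_j, and each m_j <= c_j <= sum c,
   so the bounded finite types below lose nothing. *)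
Definition Lset (k : nat) (c : {ffun 'I_k -> nat}) :
    {set 'I_(\sum_(i < k) i.+1 * c i)%N.+1} :=
  [set n : 'I_(\sum_(i < k) i.+1 * c i)%N.+1 |
     [exists m : {ffun 'I_k -> 'I_(\sum_(i < k) c i)%N.+1},
        [forall i, (m i <= c i)%N] &&
        (val n == \sum_(i < k) i.+1 * m i)%N]].

Definition Lcard (k : nat) (c : {ffun 'I_k -> nat}) : nat := #|Lset c|.

Definition Epois {R : realType} (k : nat) (f : {ffun 'I_k -> nat} -> R) : \bar R :=
  \esum_(m in [set: {ffun 'I_k -> nat}])
     ((f m)%:E * (\prod_(i < k) poisson_pmf ((i.+1)%:R^-1 : R) (m i))%:E)%E.

(* Main.v *)
Require Import Defs.
From HB Require Import structures.
From mathcomp Require Import all_boot all_order all_algebra.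
From mathcomp Require Import all_classical all_reals all_analysis.
From mathcomp Require Import ring.
Import Order.TTheory GRing.Theory Num.Theory.
Set Implicit Arguments. Unset Strict Implicit. Unset Printing Implicit Defensive.

Section Comb.
Variable k : nat.
Implicit Types (c m : {ffun 'I_k -> nat}).

Definition upd c (j : 'I_k) (n : nat) : {ffun 'I_k -> nat} :=
  [ffun i => if i == j then n else c i].

Definition bnd c := (\sum_(i < k) i.+1 * c i)%N.

Definition SN c N : {set 'I_N.+1} :=
  [set x : 'I_N.+1 | `[< exists mm : {ffun 'I_k -> nat},
      (forall i, mm i <= c i)%N /\ val x = (\sum_(i < k) i.+1 * mm i)%N >]].

Lemma bnd_mono c c' : (forall i, c i <= c' i)%N -> (bnd c <= bnd c')%N.
Proof. by move=> H; apply: leq_sum => i _; rewrite leq_mul2l H orbT. Qed.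

Lemma Lcard_SN c N : (bnd c <= N)%N -> Lcard c = #|SN c N|.
Proof.
move=> hN.
have hw : ((bnd c).+1 <= N.+1)%N by [].
have winj : injective (widen_ord hw) by move=> x y e; apply: val_inj; exact: (congr1 val e).
rewrite /Lcard -(card_imset _ winj).
congr (#|pred_of_set _|). apply/setP => x; rewrite inE; apply/imsetP/asboolP.
- case=> y; rewrite inE => /existsP[mm /andP[/forallP Hle /eqP Hy]] ->.
  exists [ffun i => val (mm i)]; split; first by move=> i; rewrite ffunE; exact: Hle.
  by rewrite /= Hy; apply: eq_bigr => i _; rewrite ffunE.
- case=> mm [Hle Hx].
  have hx : (val x < (bnd c).+1)%N.
    by rewrite ltnS Hx; apply: bnd_mono.
  exists (Ordinal hx); last by apply: val_inj.
  rewrite inE; apply/existsP.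
  have hmi i : (mm i < (\sum_(i0 < k) c i0).+1)%N.
    by rewrite ltnS (leq_trans (Hle i)) // (bigD1 i) //= leq_addr.
  exists [ffun i => Ordinal (hmi i)]; apply/andP; split.
    by apply/forallP => i; rewrite ffunE; exact: Hle.
  by rewrite /= Hx; apply/eqP; apply: eq_bigr => i _; rewrite ffunE.
Qed.

Lemma SN_mono c c' N : (forall i, c i <= c' i)%N -> SN c N \subset SN c' N.
Proof.
move=> H; apply/fintype.subsetP => x; rewrite !inE => -[mm [Hle Hx]].
exists mm; split=> // i; exact: leq_trans (Hle i) (H i).
Qed.

Lemma sum_upd (mm : {ffun 'I_k -> nat}) (j : 'I_k) :
  (\sum_(i < k) i.+1 * mm i = j.+1 * mm j + \sum_(i < k) i.+1 * upd mm j 0 i)%N.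
Proof.
rewrite (bigD1 j) //= [X in (_ = _ + X)%N](bigD1 j) //= /upd ffunE eqxx muln0 add0n.
congr (_ + _)%N; apply: eq_bigr => i /negPf hi; by rewrite ffunE hi.
Qed.

Lemma SN_upd c j n N :
  (#|SN (upd c j n) N| <= n.+1 * #|SN (upd c j 0) N|)%N.
Proof.
pose g := fun p : 'I_n.+1 * 'I_N.+1 => (inord (p.1 * j.+1 + p.2) : 'I_N.+1).
have -> : n.+1 = #|[set: 'I_n.+1]| by rewrite cardsT card_ord.
rewrite -cardsX.
apply: leq_trans (leq_imset_card g _); apply: subset_leq_card.
apply/fintype.subsetP => x; rewrite inE => /asboolP[mm [Hle Hx]].
have hmj : (mm j < n.+1)%N by have := Hle j; rewrite /upd ffunE eqxx.
set y := (\sum_(i < k) i.+1 * upd mm j 0 i)%N.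
have hxy : val x = (mm j * j.+1 + y)%N by rewrite Hx (sum_upd _ j) mulnC.
have hy : (y < N.+1)%N by rewrite (leq_ltn_trans _ (ltn_ord x)) // hxy leq_addl.
apply/imsetP; exists (Ordinal hmj, Ordinal hy).
  rewrite !inE /=; exists (upd mm j 0); split => // i.
  have := Hle i; rewrite /upd !ffunE; case: (i == j) => //.

apply: val_inj => /=; rewrite /g /= inordK -hxy //; exact: ltn_ord.
Qed.

Lemma Lcard_upd c j n : (Lcard (upd c j n) <= n.+1 * Lcard c)%N.
Proof.
set N := (bnd (upd c j n) + bnd c)%N.
have h0 : forall i, (upd c j 0 i <= c i)%N.
  by move=> i; rewrite /upd ffunE; case: (i == j).
rewrite (@Lcard_SN _ N) ?leq_addr // (@Lcard_SN c N) ?leq_addl //.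
apply: leq_trans (SN_upd _ _ _ _) _; rewrite leq_mul2l; apply/orP; right.
exact/subset_leq_card/SN_mono.
Qed.

End Comb.

Local Open Scope classical_set_scope.
Local Open Scope ring_scope.
Local Open Scope ereal_scope.

Section P.
Variable R : realType.

Lemma esumZl (T : choiceType) (I : set T) (c : R) (f : T -> \bar R) :
  (0 <= c)%R -> (forall i, 0 <= f i) ->
  \esum_(i in I) (c%:E * f i) = c%:E * \esum_(i in I) f i.
Proof.
move=> c0 f0; rewrite /esum -ereal_supZl //; last first.
  by apply/set0P; exists 0; exists set0; [exact: fsets_set0| rewrite fsbig_set0].
congr ereal_sup; rewrite image_comp; apply: eq_imagel => A [finA AI] /=.
by rewrite !fsbig_finite // ge0_sume_distrr.
Qed.


Definition lam (l : nat) : R := ((l.+1)%:R^-1)%R.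
Definition ppi (l n : nat) : R := poisson_pmf (lam l) n.

Lemma lam_gt0 l : (0 < lam l)%R.
Proof. by rewrite /lam invr_gt0 ltr0n. Qed.

Lemma lam_le1 l : (lam l <= 1)%R.
Proof. by rewrite /lam invf_le1 ?ltr0n // ler1n. Qed.

Lemma ppi_ge0 l n : (0 <= ppi l n)%R.
Proof. exact: poisson_pmf_ge0. Qed.

Lemma ppi_sum l : \esum_(n in [set: nat]) (ppi l n)%:E = 1.
Proof.
have H : poisson_prob (lam l) 0%N [set: nat] = 1.
  exact: (@probability_setT _ _ _ (poisson_prob (lam l) 0%N)).
by move: H; rewrite /poisson_prob lam_gt0.
Qed.

Lemma ppiS l n : (ppi l n.+1 * n.+1%:R = lam l * ppi l n)%R.
Proof.
rewrite /ppi /poisson_pmf lam_gt0 factS natrM invfM exprS.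
have h1 : (n.+1%:R : R) != 0%R by rewrite pnatr_eq0.
have h2 : (n`!%:R : R) != 0%R by rewrite pnatr_eq0 -lt0n fact_gt0.
by field; apply/andP; split; [exact: h2 | rewrite addrC natr1 pnatr_eq0].
Qed.

Definition Mom l a := \esum_(n in [set: nat]) (ppi l n * n%:R ^+ a)%:E.

Lemma Mom0 l : Mom l 0 = 1.
Proof. by rewrite /Mom -(ppi_sum l); apply: eq_esum => n _; rewrite expr0 mulr1. Qed.

Lemma esum_shift (f : nat -> \bar R) : (forall n, 0 <= f n) -> f 0%N = 0 ->
  \esum_(n in [set: nat]) f n = \esum_(n in [set: nat]) f n.+1.
Proof.
move=> f0 f00.
rewrite (esumID [set 0%N]) //; rewrite setTI esum_set1 ?f00 // add0e.
rewrite -(esum_image setT succn); last by move=> x y _ _ [].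
congr esum; apply/seteqP; split.
  move=> n [_ /= n0]; exists n.-1 => //; by case: n n0.
by move=> _ [m _ <-].
Qed.

Lemma MomS l a : Mom l a.+1 =
  (lam l)%:E * \sum_(i < a.+1) ('C(a, i))%:R%:E * Mom l i.
Proof.
rewrite /Mom esum_shift; last 2 first.
- by move=> n; rewrite lee_fin mulr_ge0 // ?ppi_ge0 // exprn_ge0.
- by rewrite expr0n /= mulr0.
under eq_esum => n _.
  rewrite exprS mulrA ppiS -mulrA -{1}(addn1 n) natrD exprD1n mulr_sumr EFinM -sumEFin.
  over.
rewrite esumZl; last 2 first.
- exact: ltW (lam_gt0 l).
- by move=> n; apply: sume_ge0 => i _; rewrite lee_fin mulr_ge0 ?ppi_ge0 ?mulrn_wge0 ?exprn_ge0.
congr (_ * _); rewrite esum_sum; last first.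
  by move=> n i _ _; rewrite lee_fin mulr_ge0 ?ppi_ge0 ?mulrn_wge0 ?exprn_ge0.
apply: eq_bigr => i _; rewrite -esumZl; last 2 first.
- by [].
- by move=> n; rewrite lee_fin mulr_ge0 // ?ppi_ge0 // exprn_ge0.
by apply: eq_esum => n _; rewrite -EFinM mulrnAr -mulr_natl.
Qed.


Lemma size_bell_seq n : size (bell_seq n) = n.+1.
Proof. by elim: n => //= n IH; rewrite size_rcons IH. Qed.

Lemma nth_bell_seq n i : (i <= n)%N -> nth 0%N (bell_seq n) i = bell i.
Proof.
elim: n i => [|n IH] i.
  by rewrite leqn0 => /eqP ->.
rewrite leq_eqVlt => /orP[/eqP -> // | hi].
by rewrite /= nth_rcons size_bell_seq hi; apply: IH.
Qed.

Lemma bellS a : bell a.+1 = (\sum_(i < a.+1) 'C(a, i) * bell i)%N.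
Proof.
rewrite {1}/bell /= nth_rcons size_bell_seq ltnn eqxx.
by apply: eq_bigr => i _; rewrite nth_bell_seq // -ltnS.
Qed.

Lemma MomS_le l a : (forall i, (i <= a)%N -> Mom l i <= (bell i)%:R%:E) ->
  Mom l a.+1 <= (lam l * (bell a.+1)%:R)%:E.
Proof.
move=> H; rewrite MomS bellS natr_sum EFinM; apply: lee_wpmul2l.
  by rewrite lee_fin; exact: ltW (lam_gt0 l).
rewrite -sumEFin; apply: lee_sum => i _; rewrite natrM EFinM; apply: lee_wpmul2l.
  by rewrite lee_fin ler0n.
by apply: H; rewrite -ltnS.
Qed.

Lemma Mom_le_bell l a i : (i <= a)%N -> Mom l i <= (bell i)%:R%:E.
Proof.
elim: a i => [|a IH] i.
  by rewrite leqn0 => /eqP ->; rewrite Mom0.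
rewrite leq_eqVlt => /orP[/eqP -> | /IH //].
apply: le_trans (MomS_le IH) _; rewrite lee_fin ler_piMl ?ler0n ?lam_le1 //.
Qed.

Lemma moment l a : (0 < a)%N ->
  \esum_(n in [set: nat]) (ppi l n * (n.+1%:R * n%:R ^+ a))%:E <=
  (lam l * ((bell a)%:R + (bell a.+1)%:R))%:E.
Proof.
case: a => // a _.
under eq_esum => n _ do rewrite -natr1 mulrDl mul1r -exprS mulrDr EFinD.
rewrite esumD; last 2 first.
- by move=> n _; rewrite lee_fin mulr_ge0 ?ppi_ge0 ?exprn_ge0.
- by move=> n _; rewrite lee_fin mulr_ge0 ?ppi_ge0 ?exprn_ge0.
rewrite mulrDr EFinD addeC; apply: leeD.
- by apply: (@MomS_le l a) => i hi; exact: (Mom_le_bell l hi).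
- by apply: (@MomS_le l a.+1) => i hi; exact: (Mom_le_bell l hi).
Qed.

End P.

Section Main.
Variable R : realType.
Variable k : nat.
Local Notation T := {ffun 'I_k -> nat}.

Definition pp (m : T) : R := (\prod_(i < k) ppi R i (m i))%R.

Lemma pp_ge0 m : (0 <= pp m)%R.
Proof. by apply: prodr_ge0 => i _; apply: ppi_ge0. Qed.

Lemma upd_upd (m : T) j n x : upd (upd m j n) j x = upd m j x.
Proof. by apply/ffunP => i; rewrite !ffunE; case: (i == j). Qed.

Lemma upd_id (m : T) j : upd m j (m j) = m.
Proof. by apply/ffunP => i; rewrite !ffunE; case: eqP => // ->. Qed.

Lemma upd_at (m : T) j n : upd m j n j = n.
Proof. by rewrite ffunE eqxx. Qed.

Lemma pp_upd (m : T) j n : (pp (upd m j n) * ppi R j (m j) = pp m * ppi R j n)%R.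
Proof.
rewrite /pp (bigD1 j) //= [X in (_ = X * _)%R](bigD1 j) //= upd_at.
have -> : (\prod_(i < k | i != j) ppi R i (upd m j n i) =
   \prod_(i < k | i != j) ppi R i (m i))%R.
  by apply: eq_bigr => i /negPf hi; rewrite ffunE hi.
by ring.
Qed.

Lemma resample (j : 'I_k) (F : T -> nat -> R) : (forall m n, 0 <= F m n)%R ->
  \esum_(m in [set: T]) ((F m (m j))%:E * (pp m)%:E) =
  \esum_(m in [set: T]) ((pp m)%:E *
     \esum_(n in [set: nat]) (ppi R j n * F (upd m j n) n)%:E).
Proof.
move=> F0.
have E1 m : (F m (m j))%:E * (pp m)%:E =
    \esum_(n in [set: nat]) (F m (m j) * pp m * ppi R j n)%:E.
  under eq_esum => n _ do rewrite EFinM.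
  rewrite esumZl; last 2 first.
  - by rewrite mulr_ge0 ?pp_ge0.
  - by move=> n; rewrite lee_fin ppi_ge0.
  by rewrite ppi_sum mule1 EFinM.
under eq_esum => m _ do rewrite E1.
rewrite esum_esum; last by move=> m n _ _; rewrite lee_fin !mulr_ge0 ?pp_ge0 ?ppi_ge0.
pose e := fun z : T * nat => (upd z.1 j z.2, z.1 j).
have eK : forall z, e (e z) = z.
  by case=> m n; rewrite /e /= upd_upd upd_at upd_id.
rewrite (reindex_esum ([set: T] `*`` (fun=> [set: nat])) ([set: T] `*`` (fun=> [set: nat])) e); last first.
  split.
  - by [].
  - by move=> x y _ _ H; rewrite -[x]eK -[y]eK H.
  - by move=> y _; exists (e y) => //; exact: eK.
transitivity (\esum_(z in [set: T] `*`` (fun=> [set: nat]))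
    (F (upd z.1 j z.2) z.2 * pp z.1 * ppi R j z.2)%:E).
  apply: eq_esum => -[m n] _ /=; rewrite /e /= upd_at; congr (_%:E).
  by rewrite -mulrA pp_upd; ring.
rewrite -(@esum_esum _ _ _ [set: T] (fun=> [set: nat])
   (fun m n => (F (upd m j n) n * pp m * ppi R j n)%:E)); last first.
  by move=> m n _ _; rewrite lee_fin !mulr_ge0 ?pp_ge0 ?ppi_ge0.
apply: eq_esum => m _; rewrite -esumZl; last 2 first.
- exact: pp_ge0.
- by move=> n; rewrite lee_fin mulr_ge0 ?ppi_ge0.
by apply: eq_esum => n _; rewrite -EFinM; congr (_%:E); ring.
Qed.


Lemma EpoisE (f : T -> R) :
  Epois f = \esum_(m in [set: T]) ((f m)%:E * (pp m)%:E).
Proof. by []. Qed.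

Variables (h : nat) (j : 'I_h -> 'I_k) (a : 'I_h -> nat).
Hypothesis hj : injective j.
Hypothesis ha : forall i, (0 < a i)%N.

Definition Lm (m : T) : R := (Lcard m)%:R.
Definition Q (S : seq 'I_h) (m : T) : R := (\prod_(i <- S) (m (j i))%:R ^+ a i)%R.
Definition cst i : R := (lam R (j i) * ((bell (a i))%:R + (bell (a i).+1)%:R))%R.

Lemma Q_ge0 S m : (0 <= Q S m)%R.
Proof. by apply: prodr_ge0 => i _; rewrite exprn_ge0. Qed.

Lemma cst_ge0 i : (0 <= cst i)%R.
Proof. by rewrite mulr_ge0 ?addr_ge0 // ltW // lam_gt0. Qed.

Lemma Q_upd S m i0 n : i0 \notin S -> Q S (upd m (j i0) n) = Q S m.
Proof.
move=> hi0; rewrite /Q big_seq_cond [RHS]big_seq_cond; apply: eq_bigr => i /andP[iS _].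
rewrite ffunE; case: eqP => // /hj e; by rewrite -e iS in hi0.
Qed.

Lemma main_ind S : uniq S ->
  Epois (fun m => Lm m * Q S m)%R <= (\prod_(i <- S) cst i)%:E * Epois Lm.
Proof.
elim: S => [|i0 S IH].
  move=> _; rewrite big_nil mul1e !EpoisE; apply: le_esum => m _.
  by rewrite /Q big_nil mulr1.
move=> /= /andP[i0S uS].
pose F := fun (m : T) (n : nat) => (Lm m * Q S m * n%:R ^+ a i0)%R.
have F0 m n : (0 <= F m n)%R by rewrite !mulr_ge0 ?Q_ge0 ?exprn_ge0.
rewrite EpoisE.
have -> : \esum_(m in [set: T]) ((Lm m * Q (i0 :: S) m)%R%:E * (pp m)%:E) =
    \esum_(m in [set: T]) ((F m (m (j i0)))%:E * (pp m)%:E).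
  by apply: eq_esum => m _; rewrite /F /Q big_cons; congr (_%:E * _); ring.
rewrite resample //.
apply: (@le_trans _ _ (\esum_(m in [set: T]) ((pp m)%:E * ((Lm m * Q S m)%:E * (cst i0)%:E)))).
  apply: le_esum => m _; apply: lee_wpmul2l; first by rewrite lee_fin pp_ge0.
  apply: (@le_trans _ _ (\esum_(n in [set: nat]) ((Lm m * Q S m)%:E *
      (ppi R (j i0) n * (n.+1%:R * n%:R ^+ a i0))%:E))).
    apply: le_esum => n _; rewrite -EFinM lee_fin /F Q_upd //.
    have hL : (Lm (upd m (j i0) n) <= n.+1%:R * Lm m)%R.
      by rewrite /Lm -natrM ler_nat Lcard_upd.
    have e1 : (ppi R (j i0) n * (Lm (upd m (j i0) n) * Q S m * n%:R ^+ a i0) =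
      (ppi R (j i0) n * Q S m * n%:R ^+ a i0) * Lm (upd m (j i0) n))%R by ring.
    have e2 : (Lm m * Q S m * (ppi R (j i0) n * (n.+1%:R * n%:R ^+ a i0)) =
      (ppi R (j i0) n * Q S m * n%:R ^+ a i0) * (n.+1%:R * Lm m))%R by ring.
    rewrite e1 e2; apply: ler_wpM2l => //.
    by rewrite !mulr_ge0 ?ppi_ge0 ?Q_ge0 ?exprn_ge0.
  rewrite esumZl; last 2 first.
  - by rewrite mulr_ge0 ?Q_ge0.
  - by move=> n; rewrite lee_fin !mulr_ge0 ?ppi_ge0 ?exprn_ge0.
  apply: lee_wpmul2l; first by rewrite lee_fin mulr_ge0 ?Q_ge0.
  exact: moment.
have -> : \esum_(m in [set: T]) ((pp m)%:E * ((Lm m * Q S m)%:E * (cst i0)%:E)) =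
    (cst i0)%:E * Epois (fun m => Lm m * Q S m)%R.
  rewrite EpoisE -esumZl; last 2 first.
  - exact: cst_ge0.
  - by move=> m; rewrite -EFinM lee_fin !mulr_ge0 ?Q_ge0 ?pp_ge0.
  by apply: eq_esum => m _; rewrite -!EFinM; congr (_%:E); ring.
rewrite big_cons (EFinM (cst i0)) -muleA; apply: lee_wpmul2l; first by rewrite lee_fin cst_ge0.
exact: IH.
Qed.

End Main.

Local Close Scope ereal_scope.
Local Close Scope classical_set_scope.
Unset Implicit Arguments. Set Strict Implicit. Set Printing Implicit Defensive.

Theorem lemma3p3 (R : realType) (k h : nat) (j : 'I_h -> 'I_k)
    (a : 'I_h -> nat) :
  (1 <= k)%N -> injective j -> (forall i, (0 < a i)%N) ->
  (Epois (fun X : {ffun 'I_k -> nat} =>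
            ((Lcard X)%:R * \prod_(i < h) ((X (j i))%:R ^+ a i) : R)%R)
   <= ((\prod_(i < h) (bell (a i) + bell (a i).+1)%:R
          / \prod_(i < h) ((j i).+1)%:R : R)%R%:E
       * Epois (fun X : {ffun 'I_k -> nat} => ((Lcard X)%:R : R)%R)))%E.
Proof.
move=> _ hj ha.
have H := @main_ind R k h j a hj ha (enum 'I_h) (enum_uniq _).
have eQ : forall X : {ffun 'I_k -> nat}, Q R j a (enum 'I_h) X = \prod_(i < h) ((X (j i))%:R ^+ a i).
  by move=> X; rewrite /Q big_enum.
have eC : \prod_(i <- enum 'I_h) cst R j a i =
   \prod_(i < h) (bell (a i) + bell (a i).+1)%:R / \prod_(i < h) ((j i).+1)%:R :> R.
  rewrite big_enum /= /cst big_split /= mulrC -prodfV; congr (_ * _).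
  by apply: eq_bigr => i _; rewrite natrD.
rewrite -eC; apply: le_trans H; rewrite le_eqVlt; apply/orP; left; apply/eqP.
by congr Epois; apply: funext => X; rewrite eQ.
Qed.
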